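(* Let $n$ be a power of $2$, and let $\mathcal{M}_{K_n}$ be a circular self-dual orientable embedding of $K_n$. Let $Y=K_n^\phi$ be the double cover of $K_n$ in which $\phi$ sends every arc to the non-identity element of the group of order $2$, and let $\mathcal{M}_Y$ be the associated voltage embedding. Then the $H$-digraph of $\mathcal{M}_Y$ is an oriented graph.
   Context: Setting. A circular embedding is a cellular embedding in which every face is bounded by a cycle. It is self-dual if it is isomorphic to its dual embedding. Double cover. For a group $\Gamma$ of order $r$ and a map $\phi$ from arcs to $\Gamma$ with $\phi(v,u)=\phi(u,v)^{-1}$, the graph $X^\phi$ has vertex set $V(X)\times\Gamma$, with $(u,g)\sim(v,g\phi(u,v))$. The covering map is $\psi(u,g)=u$. The voltage embedding has as facial walks the closed walks into which the $\psi$-preimages of the consistently oriented facial walks of the base embedding decompose. Vertex-face transition matrix. Fix a consistent orientation of the faces (each shared edge gets opposite directions), so each arc lies in one facial walk. Let $M$ be the arc-face incidence matrix and $N$ the arc-tail incidence matrix, and $\widehat M,\widehat N$ these with columns scaled to unit length. Then $U=(2\widehat M\widehat M^T-I)(2\widehat N\widehat N^T-I)$. $H$-digraph. The principal Hamiltonian of a unitary $V=\sum\alpha_rF_r$ (spectral decomposition) is $-i\sum\log(\alpha_r)F_r$, with $-\pi<-i\log\alpha_r\le\pi$. The $H$-digraph is the weighted digraph on the arcs whose weighted adjacency matrix is the principal Hamiltonian $H$ of $U^2$; it is always a weighted oriented graph. It is said to be an oriented graph if it is unweighted up to scaling, i.e. $iH$ is a real multiple of the skew-adjacency matrix of an oriented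 graph. *)

(* Defs.v *)
From HB Require Import structures.
From mathcomp Require Import all_boot all_order all_fingroup all_algebra.
From mathcomp Require Import reals trigo.
From mathcomp Require Import complex.
Set Implicit Arguments.
Unset Strict Implicit.
Unset Printing Implicit Defensive.
Import Order.TTheory GRing.Theory Num.Theory.
Local Open Scope ring_scope.
Local Open Scope complex_scope.

(* The complete graph K_n: vertices 'I_n, arcs = ordered pairs (u,v), u<>v. *)
Notation arcK n := {p : 'I_n * 'I_n | p.1 != p.2}.

Definition tailK n (a : arcK n) : 'I_n := (val a).1.
Definition headK n (a : arcK n) : 'I_n := (val a).2.

Lemma rev_arc_subproof n (a : arcK n) : (val a).2 != (val a).1.
Proof. by rewrite eq_sym (valP a). Qed.

Definition rev_arc n (a : arcK n) : arcK n :=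
  exist _ ((val a).2, (val a).1) (rev_arc_subproof a).

(* An orientable embedding of K_n, given by its rotation system: a          *)
(* permutation rho of the arcs preserving tails and cyclically permuting    *)
(* (as one single cycle) the arcs leaving each vertex.                      *)
Definition rotation_system n (rho : {perm (arcK n)}) : Prop :=
  (forall a, tailK (rho a) = tailK a) /\
  (forall a b, tailK a = tailK b -> fconnect rho a b).

(* Consistently oriented facial walks: the successor of arc a=(u,v) in its  *)
(* facial walk is rho (v,u).  Faces are the cycles of this permutation.     *)
Definition face_succ n (rho : {perm (arcK n)}) (a : arcK n) : arcK n :=
  rho (rev_arc a).

Definition face_of (A : finType) (f : A -> A) (a : A) : {set A} :=
  [set b | fconnect f a b].

(* Circular: every facial walk is a cycle of K_n, i.e. it has length >= 3  *)
(* and visits pairwise distinct vertices.                                  *)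
Definition circular n (rho : {perm (arcK n)}) : Prop :=
  forall a : arcK n,
    (2 < #|face_of (face_succ rho) a|)%N /\
    {in face_of (face_succ rho) a &, injective (@tailK n)}.

(* Self-dual: the embedding (rho, rev_arc) is isomorphic, as a map, to its *)
(* dual map (face_succ rho, rev_arc); the isomorphism may preserve or       *)
(* reverse the orientation.                                                *)
Definition self_dual n (rho : {perm (arcK n)}) : Prop :=
  exists sigma : {perm (arcK n)},
    (forall a, sigma (rev_arc a) = rev_arc (sigma a)) /\
    ((forall a, sigma (rho a) = face_succ rho (sigma a)) \/
     (forall a, face_succ rho (sigma (rho a)) = sigma a)).

(* Z_2-voltage double cover K_n^vol (Z_2 = bool with xor, identity false). *)
Definition tailY n (x : arcK n * bool) : 'I_n * bool := (tailK x.1, x.2).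
Definition headY n (vol : arcK n -> bool) (x : arcK n * bool) : 'I_n * bool :=
  (headK x.1, x.2 (+) vol x.1).

(* The voltage embedding: the psi-preimage of the facial walk              *)
(* a_0 a_1 ... of the base embedding, started at the lift (a_0, g), is the  *)
(* walk (a_0,g) (a_1, g (+) vol a_0) ...; these preimages decompose into    *)
(* the cycles of the following permutation of the arcs of the cover.       *)
Definition voltage_face_succ n (rho : {perm (arcK n)}) (vol : arcK n -> bool)
  (x : arcK n * bool) : arcK n * bool :=
  (face_succ rho x.1, x.2 (+) vol x.1).

Definition vol_nonid n (a : arcK n) : bool := true.

(* arc-indexed matrices are indexed via enum_val : 'I_#|A| -> A.            *)
Section Transition.
Variables (R : realType) (A V : finType) (tl : A -> V) (f : A -> A).

Definition faces : {set {set A}} := [set face_of f a | a : A].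

Definition arc_face_mx : 'M[R]_(#|A|, #|faces|) :=
  \matrix_(i < #|A|, j < #|faces|) ((enum_val i \in enum_val j) : nat)%:R.

Definition arc_tail_mx : 'M[R]_(#|A|, #|V|) :=
  \matrix_(i < #|A|, j < #|V|) ((tl (enum_val i) == enum_val j) : nat)%:R.

Definition col_normalize m k (X : 'M[R]_(m, k)) : 'M[R]_(m, k) :=
  \matrix_(i, j) (X i j / Num.sqrt (\sum_(l < m) X l j ^+ 2)).

Definition transition_mx : 'M[R]_#|A| :=
  let Mh := col_normalize arc_face_mx in
  let Nh := col_normalize arc_tail_mx in
  ((2%:R *: (Mh *m Mh^T) - 1%:M) *m (2%:R *: (Nh *m Nh^T) - 1%:M)).

End Transition.

Section Hamiltonian.
Variable R : realType.
Local Notation C := R[i].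

Definition expi (t : R) : C := (cos t)%:C + 'i * (sin t)%:C.

(* H is the principal Hamiltonian of V: V = sum_r alpha_r F_r is the        *)
(* spectral decomposition of V (distinct eigenvalues alpha_r, orthogonal    *)
(* projections F_r, nonzero, pairwise orthogonal, summing to I), written    *)
(* alpha_r = exp(i t_r) with -pi < t_r <= pi, i.e. t_r = -i log alpha_r,    *)
(* and H = sum_r t_r F_r.                                                   *)
Definition principal_hamiltonian m (W H : 'M[C]_m) : Prop :=
  exists (p : nat) (t : 'I_p -> R) (F : 'I_p -> 'M[C]_m),
    injective t /\
    (forall r, - pi < t r <= pi) /\
    (forall r, F r != 0) /\
    (forall r i j, F r j i = (F r i j)^*) /\
    (forall r s, F r *m F s = if r == s then F r else 0) /\
    \sum_(r < p) F r = 1%:M /\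
    W = \sum_(r < p) expi (t r) *: F r /\
    H = \sum_(r < p) (t r)%:C *: F r.

Definition skew_adj_mx (A : finType) (D : rel A) : 'M[R]_#|A| :=
  \matrix_(i, j) (if D (enum_val i) (enum_val j) then 1
                  else if D (enum_val j) (enum_val i) then -1 else 0).

Definition oriented_graph (A : finType) (D : rel A) : Prop :=
  forall a b, D a b -> ~~ D b a.

(* the weighted digraph with adjacency matrix H is an oriented graph: iH is *)
(* a real multiple of the skew-adjacency matrix of an oriented graph.       *)
Definition is_oriented_graph_mx (A : finType) (H : 'M[C]_#|A|) : Prop :=
  exists (c : R) (D : rel A),
    oriented_graph D /\
    'i *: H = map_mx (fun x : R => x%:C) (c *: skew_adj_mx D).

End Hamiltonian.

Definition voltage_transition_mx (R : realType) n (rho : {perm (arcK n)})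
  (vol : arcK n -> bool) : 'M[R[i]]_#|{: (arcK n) * bool}| :=
  map_mx (fun x : R => x%:C)
    (transition_mx R (@tailY n) (voltage_face_succ rho vol)).

(* Main.v *)
Require Import Defs.
From HB Require Import structures.
From mathcomp Require Import all_boot all_order all_fingroup all_algebra.
From mathcomp Require Import reals trigo.
From mathcomp Require Import complex.
Import Order.TTheory GRing.Theory Num.Theory.
Local Open Scope ring_scope.
Local Open Scope complex_scope.
From mathcomp Require Import zify ring lra.

Set Implicit Arguments.
Unset Strict Implicit.
Unset Printing Implicit Defensive.

Section GenFace.
Variables (T : finType) (f : T -> T).
Hypothesis injf : injective f.

Lemma face_refl x : x \in face_of f x.
Proof. by rewrite inE connect0. Qed.

Lemma face_sym x y : (y \in face_of f x) = (x \in face_of f y).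
Proof. by rewrite !inE fconnect_sym. Qed.

Lemma face_eq x y : y \in face_of f x -> face_of f y = face_of f x.
Proof.
move=> hy; apply/setP=> z; rewrite !inE; apply/idP/idP => hz.
  by apply: connect_trans hz; rewrite inE in hy.
by apply: connect_trans hz; rewrite fconnect_sym; rewrite inE in hy.
Qed.

Lemma face_in_faces x : face_of f x \in faces f.
Proof. by apply/imsetP; exists x. Qed.

Lemma mem_faces Fs x : Fs \in faces f -> (x \in Fs) = (Fs == face_of f x).
Proof.
case/imsetP => y _ ->; apply/idP/eqP => [h|->]; last exact: face_refl.
by rewrite (face_eq h).
Qed.

Lemma sum_faces (V : nmodType) x (g : {set T} -> V) :
  \sum_(Fs in faces f) (if x \in Fs then g Fs else 0) = g (face_of f x).
Proof.
rewrite (bigD1 (face_of f x)) ?face_in_faces //= face_refl big1 ?addr0 //.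
by move=> Fs /andP[hF hne]; rewrite (mem_faces _ hF) (negbTE hne).
Qed.

Lemma iter_face k x : iter k f x \in face_of f x.
Proof. by rewrite inE fconnect_iter. Qed.

Lemma face_iter x y : y \in face_of f x -> exists k, y = iter k f x.
Proof. by rewrite inE => /iter_findex <-; eexists. Qed.

End GenFace.

Set Implicit Arguments.
Unset Strict Implicit.
Unset Printing Implicit Defensive.

Lemma rev_arcK n : involutive (@rev_arc n).
Proof. by move=> a; apply: val_inj; case: a => [[u v] h]. Qed.

Lemma arc_eq n (a b : arcK n) : tailK a = tailK b -> headK a = headK b -> a = b.
Proof.
move=> h1 h2; apply: val_inj.
by rewrite [val a]surjective_pairing [val b]surjective_pairing; congr pair.
Qed.

Lemma card_tail n (u : 'I_n) : #|[set b : arcK n | tailK b == u]| = n.-1.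
Proof.
rewrite -(@card_in_imset _ _ (@headK n)); last first.
  move=> b c; rewrite !inE => /eqP hb /eqP hc hh; apply: arc_eq => //.
  by rewrite hb hc.
have -> : (@headK n) @: [set b : arcK n | tailK b == u] = [set~ u].
  apply/setP=> v; rewrite in_setC1; apply/imsetP/idP.
    case=> b; rewrite inE => /eqP <- ->.
    by rewrite /headK /tailK eq_sym (valP b).
  move=> hv; have h : (u, v).1 != (u, v).2 by rewrite eq_sym.
  by exists (exist _ (u, v) h); rewrite ?inE.
by rewrite cardsC1 card_ord.
Qed.

Section Base.
Variables (n : nat) (rho : {perm (arcK n)}).
Hypotheses (Hrot : rotation_system rho) (Hcirc : circular rho)
  (Hsd : self_dual rho).

Definition fsb := face_succ rho.
Lemma fsb_inj : injective fsb.
Proof. by move=> a b; rewrite /fsb /face_succ => /perm_inj /(can_inj (@rev_arcK n)). Qed.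

Local Notation F := (face_of fsb).
Definition Tf a := (@tailK n) @: F a.

Lemma iter_tail (tau : arcK n -> arcK n) : (forall b, tailK (tau b) = tailK b) ->
  forall k b, tailK (iter k tau b) = tailK b.
Proof. by move=> h; elim=> [//|k IH] b; rewrite iterS h IH. Qed.

Lemma card_F a : #|F a| = n.-1.
Proof.
case: Hsd => sigma [hrev hcase].
have key : forall c, F (sigma c) = sigma @: [set b | tailK b == tailK c].
  move=> c; apply/eqP; rewrite eqEsubset; apply/andP; split.
    have [tau [htau hs]] : exists tau : arcK n -> arcK n,
        (forall b, tailK (tau b) = tailK b) /\ (forall b, fsb (sigma b) = sigma (tau b)).
      case: hcase => h.
        by exists rho; split; [exact: Hrot.1 | move=> b; rewrite /fsb h].
      exists (rho^-1)%g; split.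
        by move=> b; rewrite -{2}(permKV rho b) Hrot.1.
      by move=> b; rewrite /fsb -{1}(permKV rho b) h.
    have hit : forall k, iter k fsb (sigma c) = sigma (iter k tau c).
      by elim=> [//|k IH]; rewrite !iterS IH hs.
    apply/subsetP=> y /face_iter [k ->]; rewrite hit; apply: imset_f.
    by rewrite inE (iter_tail htau).
  apply/subsetP=> y /imsetP [b]; rewrite inE => /eqP hb ->.
  case: hcase => h.
    have hit : forall k, iter k fsb (sigma c) = sigma (iter k rho c).
      by elim=> [//|k IH]; rewrite !iterS IH h.
    have := Hrot.2 c b (esym hb) => /iter_findex <-.
    by rewrite -hit iter_face.
  have hit : forall k b', sigma b' = iter k fsb (sigma (iter k rho b')).
    elim=> [//|k IH] b'; rewrite iterSr iterS /fsb h; exact: IH.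
  have := Hrot.2 b c hb => /iter_findex hc.
  by rewrite inE (hit (findex rho b c) b) hc fconnect_iter.
rewrite -(permKV sigma a) key card_imset; last exact: perm_inj.
exact: card_tail.
Qed.

End Base.

Set Implicit Arguments.
Unset Strict Implicit.
Unset Printing Implicit Defensive.

Lemma card_arcs n : #|{: arcK n}| = (n * n.-1)%N.
Proof.
rewrite -sum1_card (partition_big (@tailK n) predT) //=.
rewrite (eq_bigr (fun _ => n.-1)) ?sum_nat_const ?card_ord //.
move=> u _; rewrite -(card_tail u) -sum1_card; apply: eq_bigl => b.
by rewrite inE.
Qed.

Lemma sum_faces_nat (T : finType) (f : T -> T) (injf : injective f) x :
  (\sum_(Fs in faces f) (if x \in Fs then 1 else 0))%N = 1%N.
Proof.
rewrite (bigD1 (face_of f x)) ?face_in_faces //= face_refl big1 ?addn0 //.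
by move=> Fs /andP[hF hne]; rewrite (mem_faces injf x hF) (negbTE hne).
Qed.

Section Base2.
Variables (n : nat) (rho : {perm (arcK n)}).
Hypotheses (Hrot : rotation_system rho) (Hcirc : circular rho)
  (Hsd : self_dual rho).
Local Notation fs := (fsb rho).
Local Notation F := (face_of (fsb rho)).
Local Notation T := (Tf rho).

Lemma card_T a : #|T a| = n.-1.
Proof.
by rewrite card_in_imset ?(card_F Hrot Hsd) //; case: (Hcirc a).
Qed.

Lemma nm1_gt2 (a : arcK n) : (2 < n.-1)%N.
Proof. by rewrite -(card_F Hrot Hsd a); case: (Hcirc a). Qed.

Lemma card_faces (a0 : arcK n) : #|faces fs| = n.
Proof.
have hn := nm1_gt2 a0.
have h1 : (\sum_(Fs in faces fs) #|Fs|)%N = #|{: arcK n}|.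
  transitivity (\sum_(x : arcK n) \sum_(Fs in faces fs) (if x \in Fs then 1 else 0))%N.
    rewrite exchange_big /=; apply: eq_bigr => Fs _.
    by rewrite -big_mkcond sum1_card.
  rewrite -sum1_card; apply: eq_bigr => x _.
  exact: sum_faces_nat (@fsb_inj n rho) x.
have h2 : (\sum_(Fs in faces fs) #|Fs|)%N = (#|faces fs| * n.-1)%N.
  rewrite (eq_bigr (fun _ => n.-1)) ?sum_nat_const // => Fs /imsetP [x _ ->].
  exact: card_F.
move: h1; rewrite h2 card_arcs => /eqP; rewrite eqn_pmul2r; last by lia.
by move/eqP.
Qed.

Lemma tail_inj_F a : {in F a &, injective (@tailK n)}.
Proof. by case: (Hcirc a). Qed.

Lemma T_neq a b : b \notin F a -> T a != T b.
Proof.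
move=> hb; apply/negP => /eqP hT.
have hn := nm1_gt2 a.
have [v _ hv] : exists2 v, v \in [set: 'I_n] & v \notin T a.
  apply/subsetPn; apply/negP => /subset_leq_card.
  by rewrite cardsT card_ord card_T; lia.
pose S := [set c : arcK n | tailK c == v].
have hS : #|F @: S| = n.-1.
  rewrite card_in_imset ?card_tail // => c c'; rewrite !inE => /eqP hc /eqP hc' hF.
  apply: (@tail_inj_F c); rewrite ?face_refl //; first by rewrite hF face_refl.
  by rewrite hc hc'.
have hnot : forall x, v \notin T x -> F x \notin F @: S.
  move=> x hx; apply/imsetP => [[c]]; rewrite inE => /eqP hc hF.
  move/negP: hx; apply; apply/imsetP; exists c => //; rewrite hF face_refl //.
have hab : F a != F b.
  apply/eqP => hF; move/negP: hb; apply; rewrite hF; exact: face_refl.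
have : (#|F a |: (F b |: (F @: S))| <= #|faces fs|)%N.
  apply: subset_leq_card; apply/subsetP => G; rewrite !inE.
  case/orP => [/eqP ->|]; first exact: face_in_faces.
  case/orP => [/eqP ->|]; first exact: face_in_faces.
  by case/imsetP => c _ ->; exact: face_in_faces.
rewrite !cardsU1 hS (card_faces a) !inE (negbTE hab) /= (hnot a hv).
have hvb : v \notin T b by rewrite -hT.
by rewrite (hnot b hvb); lia.
Qed.

Lemma cardTI a b : #|T a :&: T b| = if b \in F a then n.-1 else n.-2.
Proof.
have hn := nm1_gt2 a.
case: ifP => hb.
  have -> : T b = T a by rewrite /Tf (face_eq (@fsb_inj n rho) hb).
  by rewrite setIid card_T.
have hne := T_neq (negbT hb).
have hU : #|T a :|: T b| = n.
  apply/eqP; rewrite eqn_leq; apply/andP; split.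
    by rewrite -[X in (_ <= X)%N](card_ord n) max_card.
  rewrite leqNgt; apply/negP => hlt.
  have e1 : T a = T a :|: T b.
    apply/eqP; rewrite eqEcard subsetUl card_T; lia.
  have e2 : T b \subset T a by rewrite e1 subsetUr.
  move/negP: hne; apply; rewrite eq_sym eqEcard e2 !card_T leqnn //.
have := cardsUI (T a) (T b); rewrite hU !card_T; lia.
Qed.

End Base2.

Set Implicit Arguments.
Unset Strict Implicit.
Unset Printing Implicit Defensive.

Section Cover.
Variables (n : nat) (rho : {perm (arcK n)}).
Hypotheses (Hrot : rotation_system rho) (Hcirc : circular rho)
  (Hsd : self_dual rho) (Hodd : odd n.-1).
Local Notation fs := (fsb rho).
Local Notation F := (face_of (fsb rho)).
Local Notation T := (Tf rho).

Definition vfs := voltage_face_succ rho (@vol_nonid n).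

Lemma vfsE x : vfs x = (fs x.1, ~~ x.2).
Proof. by rewrite /vfs /voltage_face_succ /vol_nonid addbT. Qed.

Lemma vfs_inj : injective vfs.
Proof.
move=> [a g] [b h]; rewrite !vfsE /= => [[/(@fsb_inj n rho) -> /negb_inj ->]] //.
Qed.

Lemma iter_vfs k x : iter k vfs x = (iter k fs x.1, x.2 (+) odd k).
Proof.
elim: k => [|k IH]; first by rewrite addbF; case: x.
by rewrite iterS IH vfsE /= addbN.
Qed.

Lemma face_cover x : face_of vfs x = [set y | y.1 \in F x.1].
Proof.
apply/setP => y; rewrite [RHS]inE; apply/idP/idP.
  by case/face_iter => k ->; rewrite iter_vfs /= iter_face.
case/face_iter => k hk.
have ho : fingraph.order fs x.1 = n.-1.
  rewrite -(card_F Hrot Hsd x.1) /fingraph.order /face_of.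
  by apply: eq_card => z; rewrite inE.
case: (boolP (y.2 == x.2 (+) odd k)) => h2.
  suff -> : y = iter k vfs x by exact: iter_face.
  by rewrite iter_vfs -hk -(eqP h2) -surjective_pairing.
suff -> : y = iter (k + n.-1) vfs x by exact: iter_face.
rewrite iter_vfs oddD Hodd addbT iterD -ho iter_order; last exact: fsb_inj.
rewrite -hk; apply/eqP; rewrite [y]surjective_pairing.
by rewrite xpair_eqE eqxx /=; move: h2; case: (y.2); case: (x.2); case: (odd k).
Qed.

Lemma card_face_cover x : #|face_of vfs x| = (2 * n.-1)%N.
Proof.
rewrite face_cover.
have -> : [set y | y.1 \in F x.1] = setX (F x.1) [set: bool].
  by apply/setP => y; rewrite !inE andbT.
by rewrite cardsX cardsT card_bool (card_F Hrot Hsd) mulnC.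
Qed.

End Cover.

Set Implicit Arguments.
Unset Strict Implicit.
Unset Printing Implicit Defensive.

Section Mxo.
Variable R : realType.
Variable AT : finType.
Definition mxo (g : AT -> AT -> R) : 'M[R]_#|{: AT}| :=
  \matrix_(i, j) g (enum_val i) (enum_val j).

Lemma mxo_mul g h : mxo g *m mxo h = mxo (fun x y => \sum_z g x z * h z y).
Proof.
apply/matrixP=> i j; rewrite /mxo !mxE.
rewrite (big_enum_val (A := predT) (fun z => g (enum_val i) z * h z (enum_val j))).
by apply: eq_bigr => k _; rewrite !mxE.
Qed.

Lemma mxo_tr g : (mxo g)^T = mxo (fun x y => g y x).
Proof. by apply/matrixP=> i j; rewrite /mxo !mxE. Qed.

Lemma mxo_ext g h : (forall x y, g x y = h x y) -> mxo g = mxo h.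
Proof. by move=> e; apply/matrixP=> i j; rewrite /mxo !mxE e. Qed.

Lemma mxo_lin (a b : R) g h :
  a *: mxo g + b *: mxo h = mxo (fun x y => a * g x y + b * h x y).
Proof. by apply/matrixP=> i j; rewrite /mxo !mxE. Qed.

Lemma sum_if_const (c : pred AT) (k : R) :
  \sum_z (if c z then k else 0) = #|[set z | c z]|%:R * k.
Proof.
rewrite -big_mkcond /= mulr_natl -sumr_const; apply: eq_bigl => z.
by rewrite inE.
Qed.

End Mxo.

Lemma mul_if (R : pzSemiRingType) (b1 b2 : bool) (x y : R) :
  (if b1 then x else 0) * (if b2 then y else 0) = if b1 && b2 then x * y else 0.
Proof. by case: b1; case: b2; rewrite ?mulr0 ?mul0r. Qed.

Lemma card_fst (T1 : finType) (c : pred T1) :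
  #|[set z : T1 * bool | c z.1]| = (2 * #|[set b | c b]|)%N.
Proof.
have -> : [set z : T1 * bool | c z.1] = setX [set b | c b] [set: bool].
  by apply/setP => z; rewrite !inE andbT.
by rewrite cardsX cardsT card_bool mulnC.
Qed.

Lemma card_fst1 (T1 : finType) (c : pred T1) (g : bool) :
  #|[set z : T1 * bool | c z.1 && (z.2 == g)]| = #|[set b | c b]|.
Proof.
have -> : [set z : T1 * bool | c z.1 && (z.2 == g)] = setX [set b | c b] [set g].
  by apply/setP => z; rewrite !inE.
by rewrite cardsX cards1 muln1.
Qed.

Section Comb.
Variables (n : nat) (rho : {perm (arcK n)}).
Hypotheses (Hrot : rotation_system rho) (Hcirc : circular rho)
  (Hsd : self_dual rho).
Local Notation fs := (fsb rho).
Local Notation F := (face_of (fsb rho)).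
Local Notation T := (Tf rho).
Local Notation AT := (arcK n * bool)%type.

Lemma tailY_eq (x z : AT) :
  (tailY x == tailY z) = (tailK x.1 == tailK z.1) && (x.2 == z.2).
Proof. by rewrite /tailY xpair_eqE. Qed.

Lemma fc_sym a b : fconnect fs a b = fconnect fs b a.
Proof. exact: (fconnect_sym (@fsb_inj n rho)). Qed.

Lemma fc_trans a b c : fconnect fs a b -> fconnect fs b c = fconnect fs a c.
Proof.
move=> hab; apply/idP/idP => h; first exact: connect_trans h.
by apply: connect_trans h; rewrite fc_sym.
Qed.

Lemma C1 (x y : AT) :
  #|[set z : AT | fconnect fs x.1 z.1 && fconnect fs z.1 y.1]| =
  if fconnect fs x.1 y.1 then (2 * n.-1)%N else 0%N.
Proof.
case: ifP => hy.
  rewrite -(card_F Hrot Hsd x.1) -card_fst; apply: eq_card => z; rewrite !inE.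
  case: (boolP (fconnect fs x.1 z.1)) => //= hz.
  by rewrite (fc_trans _ hz) hy.
apply/eqP; rewrite cards_eq0; apply/eqP/setP => z; rewrite !inE.
apply/negP => /andP [hz hyz]; move: hyz; rewrite (fc_trans _ hz) hy.
by [].
Qed.

Lemma C2 (x y : AT) :
  #|[set z : AT | (tailY x == tailY z) && (tailY z == tailY y)]| =
  if tailY x == tailY y then n.-1 else 0%N.
Proof.
case: ifP => hy.
  rewrite -(card_tail (tailK x.1)) -(card_fst1 [pred b | tailK b == tailK x.1] x.2).
  apply: eq_card => z.
  rewrite !inE -(eqP hy) [tailY z == _]eq_sym andbb tailY_eq /=.
  by rewrite eq_sym [x.2 == _]eq_sym.
apply/eqP; rewrite cards_eq0; apply/eqP/setP => z; rewrite !inE.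
apply/negP => /andP [/eqP h1 /eqP h2]; move: hy; rewrite h1 h2 eqxx.
by [].
Qed.

Lemma C3 (x y : AT) :
  #|[set z : AT | fconnect fs x.1 z.1 && (tailY z == tailY y)]| =
  nat_of_bool (tailK y.1 \in T x.1).
Proof.
transitivity #|[set b | fconnect fs x.1 b && (tailK b == tailK y.1)]|.
  rewrite -(card_fst1 _ y.2); apply: eq_card => z; rewrite !inE tailY_eq andbA.
  by [].
case: (boolP (tailK y.1 \in T x.1)) => ht.
  case/imsetP: (ht) => b0 hb0 ht0.
  rewrite (_ : [set b | _] = [set b0]) ?cards1 //.
  apply/setP => b; rewrite !inE /=; apply/andP/eqP => [[hb /eqP htb]|->].
    apply: (tail_inj_F Hcirc (a := x.1)) => //; first by rewrite inE.
    by rewrite htb ht0.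
  by rewrite -inE hb0 ht0 eqxx.
apply/eqP; rewrite cards_eq0; apply/eqP/setP => b; rewrite !inE /=.
apply/negP => /andP [hb /eqP htb]; move/negP: ht; apply; apply/imsetP.
by exists b; rewrite // inE.
Qed.

Lemma C4 (x y : AT) :
  #|[set z : AT | (tailK z.1 \in T x.1) && fconnect fs z.1 y.1]| =
  (2 * (if fconnect fs x.1 y.1 then n.-1 else n.-2))%N.
Proof.
have -> : fconnect fs x.1 y.1 = (y.1 \in F x.1) by rewrite inE.
transitivity (2 * #|[set b | (tailK b \in T x.1) && fconnect fs b y.1]|)%N.
  by rewrite -card_fst.
rewrite -(cardTI Hrot Hcirc Hsd); congr (2 * _)%N.
rewrite -(@card_in_imset _ _ (@tailK n)); last first.
  move=> b c; rewrite !inE => /andP [_ hb] /andP [_ hc].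
  by apply: (tail_inj_F Hcirc (a := y.1)); rewrite inE fc_sym.
apply: eq_card => v; rewrite in_setI; apply/imsetP/andP.
  case=> b; rewrite inE => /andP [hb1 hb2] ->; split => //.
  by apply/imsetP; exists b; rewrite // inE fc_sym.
case=> hv1 /imsetP [b hb hvb]; exists b => //.
by rewrite inE -hvb hv1 /= fc_sym -inE.
Qed.

End Comb.

Set Implicit Arguments.
Unset Strict Implicit.
Unset Printing Implicit Defensive.

Section Rel.
Variables (R : realType) (n : nat) (rho : {perm (arcK n)}).
Hypotheses (Hrot : rotation_system rho) (Hcirc : circular rho)
  (Hsd : self_dual rho).
Variable a0 : arcK n.
Local Notation fs := (fsb rho).
Local Notation F := (face_of (fsb rho)).
Local Notation T := (Tf rho).
Local Notation AT := (arcK n * bool)%type.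

Definition mR : R := (n.-1)%:R.
Definition Pf (x y : AT) : R := if fconnect fs x.1 y.1 then (2 * mR)^-1 else 0.
Definition Qf (x y : AT) : R := if tailY x == tailY y then mR^-1 else 0.
Definition Ef (x y : AT) : R := (2 * (n%:R * mR))^-1.
Definition PQf (x y : AT) : R := if tailK y.1 \in T x.1 then (2 * mR * mR)^-1 else 0.
Definition alpha : R := (mR * mR)^-1.

Lemma m_gt2 : (2 < n.-1)%N. Proof. exact: (nm1_gt2 Hrot Hcirc Hsd a0). Qed.
Lemma mR_neq0 : mR != 0.
Proof. by rewrite /mR pnatr_eq0 -lt0n; have := m_gt2; lia. Qed.
Lemma nR_eq : n%:R = mR + 1 :> R.
Proof. by rewrite /mR natr1 prednK //; have := m_gt2; lia. Qed.

Lemma mR0 : (n.-1)%:R != 0 :> R. Proof. exact: mR_neq0. Qed.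
Lemma mR1 : (n.-1)%:R + 1 != 0 :> R.
Proof. by rewrite natr1 pnatr_eq0. Qed.
Ltac side := rewrite ?mR0 ?mR1 ?(negbTE mR0) ?(negbTE mR1) ?andbT ?andTb //.

Lemma card_AT : #|{: AT}| = (2 * (n * n.-1))%N.
Proof. by rewrite card_prod card_arcs card_bool mulnC. Qed.

Lemma R1 x y : \sum_z Pf x z * Pf z y = Pf x y.
Proof.
rewrite (eq_bigr (fun z => if fconnect fs x.1 z.1 && fconnect fs z.1 y.1
   then (2 * mR)^-1 * (2 * mR)^-1 else 0)); last by move=> z _; rewrite mul_if.
rewrite sum_if_const (C1 Hrot Hsd) /Pf.
have := mR_neq0; case: ifP => _ h; last by rewrite mul0r.
rewrite natrM -/mR; field; side.
Qed.

Lemma R2 x y : \sum_z Qf x z * Qf z y = Qf x y.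
Proof.
rewrite (eq_bigr (fun z => if (tailY x == tailY z) && (tailY z == tailY y)
   then mR^-1 * mR^-1 else 0)); last by move=> z _; rewrite mul_if.
rewrite sum_if_const (C2 x y) /Qf.
have := mR_neq0; case: ifP => _ h; last by rewrite mul0r.
rewrite -/mR; field; side.
Qed.

Lemma R3 x y : \sum_z Pf x z * Qf z y = PQf x y.
Proof.
rewrite (eq_bigr (fun z => if fconnect fs x.1 z.1 && (tailY z == tailY y)
   then (2 * mR)^-1 * mR^-1 else 0)); last by move=> z _; rewrite mul_if.
rewrite sum_if_const (C3 Hcirc x y) /PQf.
have := mR_neq0; case: ifP => _ h /=; last by rewrite mul0r.
rewrite mul1r; field; side.
Qed.

Lemma R4 x y : \sum_z PQf x z * Pf z y = alpha * Pf x y + (1 - alpha) * Ef x y.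
Proof.
rewrite (eq_bigr (fun z => if (tailK z.1 \in T x.1) && fconnect fs z.1 y.1
   then (2 * mR * mR)^-1 * (2 * mR)^-1 else 0)); last by move=> z _; rewrite mul_if.
rewrite sum_if_const (C4 Hrot Hcirc Hsd x y) /Pf /Ef /alpha nR_eq.
have := mR_neq0; have hm := m_gt2.
case: ifP => _ h.
  rewrite natrM -/mR; field; side.
rewrite natrM mulr0 add0r.
have -> : (n.-2)%:R = mR - 1 :> R.
  rewrite /mR -[in RHS](@prednK n.-1); last lia.
  by rewrite -natr1 addrK.
field; side.
Qed.

Lemma R5P x y : \sum_z Pf x z * Ef z y = Ef x y.
Proof.
rewrite -big_distrl /= /Pf sum_if_const.
have -> : #|[set z : AT | fconnect fs x.1 z.1]| = (2 * n.-1)%N.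
  by rewrite card_fst -(card_F Hrot Hsd x.1).
have := mR_neq0 => h.
rewrite natrM -/mR /Ef nR_eq; field; side.
Qed.

Lemma R5Q x y : \sum_z Qf x z * Ef z y = Ef x y.
Proof.
rewrite -big_distrl /= /Qf sum_if_const.
have -> : #|[set z : AT | tailY x == tailY z]| = n.-1.
  rewrite -(card_tail (tailK x.1)) -(card_fst1 [pred b | tailK b == tailK x.1] x.2).
  by apply: eq_card => z; rewrite !inE tailY_eq /= eq_sym [x.2 == _]eq_sym.
have := mR_neq0 => h.
rewrite -/mR /Ef nR_eq; field; side.
Qed.

Lemma R5E x y : \sum_z Ef x z * Ef z y = Ef x y.
Proof.
rewrite /Ef sumr_const card_AT -(mulr_natl _ (2 * (n * n.-1))).
have := mR_neq0 => h.
rewrite !natrM -/mR nR_eq; field; side.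
Qed.

Lemma Pf_sym x y : Pf y x = Pf x y.
Proof. by rewrite /Pf (fc_sym rho). Qed.

Lemma Qf_sym x y : Qf y x = Qf x y.
Proof. by rewrite /Qf eq_sym. Qed.

End Rel.

Set Implicit Arguments.
Unset Strict Implicit.
Unset Printing Implicit Defensive.

Lemma sqr_bool (R : realType) (b : bool) : ((b : nat)%:R : R) ^+ 2 = (b : nat)%:R.
Proof. by case: b; rewrite ?expr0n ?expr1n. Qed.

Lemma sum_bool_card (R : realType) (T : finType) (P : pred T) :
  \sum_(l < #|{: T}|) (((enum_val l \in P) : nat)%:R : R) = #|P|%:R.
Proof.
rewrite -(big_enum_val (A := predT) (fun z => ((z \in P) : nat)%:R)) /=.
rewrite -sum1_card natr_sum [RHS]big_mkcond /=.
apply: eq_bigr => z _.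
by case: (z \in P).
Qed.

Section Proj.
Variables (R : realType) (n : nat) (rho : {perm (arcK n)}).
Hypotheses (Hrot : rotation_system rho) (Hcirc : circular rho)
  (Hsd : self_dual rho) (Hodd : odd n.-1).
Variable a0 : arcK n.
Local Notation fs := (fsb rho).
Local Notation AT := (arcK n * bool)%type.

Lemma Mh_prod :
  let Mh := col_normalize (arc_face_mx R (vfs rho)) in
  Mh *m Mh^T = mxo (Pf R rho).
Proof.
move=> Mh; apply/matrixP => i j.
rewrite /Mh /col_normalize /arc_face_mx /mxo !mxE.
have hs : forall k : 'I_#|faces (vfs rho)|,
  \sum_(l < #|{: AT}|) (\matrix_(i0, j0) (((enum_val i0 \in (enum_val j0 : {set AT})) : nat)%:R : R)) l k ^+ 2
   = (2 * n.-1)%:R.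
  move=> k; under eq_bigr => l _ do rewrite mxE sqr_bool.
  rewrite (sum_bool_card R (mem (enum_val k : {set AT}))).
  have : enum_val k \in faces (vfs rho) by exact: enum_valP.
  case/imsetP => x _ ->.
  by rewrite (card_face_cover Hrot Hsd Hodd).
have hm : (2 * n.-1)%:R != 0 :> R.
  by rewrite pnatr_eq0 muln_eq0 /=; have := nm1_gt2 Hrot Hcirc Hsd a0; lia.
under eq_bigr => k _ do rewrite !mxE hs.
rewrite (eq_bigr (fun k => (fun Fs : {set AT} => if enum_val i \in Fs then
   (if enum_val j \in Fs then (2 * n.-1)%:R^-1 else 0) else 0) (enum_val k))); last first.
  move=> k _ /=.
  set s := Num.sqrt _.
  have hs2 : s * s = (2 * n.-1)%:R.
    by rewrite /s -expr2 sqr_sqrtr // ler0n.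
  case: (enum_val i \in enum_val k); case: (enum_val j \in enum_val k);
   rewrite ?mul0r ?mulr0 //= !mul1r -invfM hs2 //.

have h := sum_faces (@vfs_inj n rho) (enum_val i)
  (fun Fs => if enum_val j \in Fs then (2 * n.-1)%:R^-1 else 0 : R).
rewrite big_enum_val /= in h.
by rewrite h (face_cover Hrot Hsd Hodd) !inE /Pf natrM.
Qed.

Lemma Nh_prod :
  let Nh := col_normalize (arc_tail_mx R (@tailY n)) in
  Nh *m Nh^T = mxo (Qf R (n := n)).
Proof.
move=> Nh; apply/matrixP => i j.
rewrite /Nh /col_normalize /arc_tail_mx /mxo !mxE.
have hs : forall k : 'I_#|{: 'I_n * bool}|,
  \sum_(l < #|{: AT}|) (\matrix_(i0, j0) (((tailY (enum_val i0) == enum_val j0) : nat)%:R : R)) l k ^+ 2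
   = (n.-1)%:R.
  move=> k; under eq_bigr => l _ do rewrite mxE sqr_bool.
  rewrite (sum_bool_card R [pred z : AT | tailY z == enum_val k]).
  case: (enum_val k) => u g.
  rewrite -(card_tail u) -(card_fst1 [pred b | tailK b == u] g).
  by congr (_%:R); apply: eq_card => z; rewrite !inE /tailY xpair_eqE.
have hm : (n.-1)%:R != 0 :> R.
  by rewrite pnatr_eq0; have := nm1_gt2 Hrot Hcirc Hsd a0; lia.
under eq_bigr => k _ do rewrite !mxE hs.
rewrite (eq_bigr (fun k => (fun v : 'I_n * bool => if tailY (enum_val i) == v then
   (if tailY (enum_val j) == v then (n.-1)%:R^-1 else 0) else 0) (enum_val k))); last first.
  move=> k _ /=.
  set s := Num.sqrt _.
  have hs2 : s * s = (n.-1)%:R.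
    by rewrite /s -expr2 sqr_sqrtr // ler0n.
  case: (tailY (enum_val i) == enum_val k); case: (tailY (enum_val j) == enum_val k);
   rewrite ?mul0r ?mulr0 //= !mul1r -invfM hs2 //.
have h : \sum_(v : 'I_n * bool) (if tailY (enum_val i) == v then
   (if tailY (enum_val j) == v then (n.-1)%:R^-1 else 0) else 0 : R)
   = if tailY (enum_val i) == tailY (enum_val j) then (n.-1)%:R^-1 else 0.
  rewrite -big_mkcond /= (big_pred1 (tailY (enum_val i))) /=; last first.
    by move=> v; rewrite eq_sym.
  by rewrite eq_sym.
rewrite (big_enum_val (A := predT)) /= in h.
by rewrite h.
Qed.

End Proj.

Set Implicit Arguments.
Unset Strict Implicit.
Unset Printing Implicit Defensive.

Section Alg.
Variables (R : fieldType) (N : nat) (P Q E : 'M[R]_N) (a : R).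
Hypotheses (PP : P *m P = P) (QQ : Q *m Q = Q) (EE : E *m E = E)
  (PE : P *m E = E) (EP : E *m P = E) (QE : Q *m E = E) (EQ : E *m Q = E)
  (PQP : P *m Q *m P = a *: P + (1 - a) *: E).

Let l2 (A B C : 'M[R]_N) : A *m B = C -> forall w : 'M[R]_N, w *m A *m B = w *m C.
Proof. by move=> h w; rewrite -mulmxA h. Qed.
Let PQP_l (w : 'M[R]_N) : w *m P *m Q *m P = w *m (a *: P + (1 - a) *: E).
Proof. by rewrite -!mulmxA (mulmxA P) PQP. Qed.
Let PP_l := l2 PP. Let QQ_l := l2 QQ. Let EE_l := l2 EE. Let PE_l := l2 PE.
Let EP_l := l2 EP. Let QE_l := l2 QE. Let EQ_l := l2 EQ.

Ltac norm := repeat (first [ rewrite mulmxDl | rewrite mulmxDr | rewrite mulmxBl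
  | rewrite mulmxBr | rewrite mulNmx | rewrite mulmxN | rewrite mul1mx
  | rewrite mulmx1 | rewrite mulmxA | rewrite scalerA | rewrite scalerDr
  | rewrite scalerBr | rewrite scalerN | rewrite scaleNr | rewrite -scalemxAl
  | rewrite -scalemxAr | rewrite PQP | rewrite PQP_l | rewrite PP | rewrite PP_l
  | rewrite QQ | rewrite QQ_l | rewrite EE | rewrite EE_l | rewrite PE
  | rewrite PE_l | rewrite EP | rewrite EP_l | rewrite QE | rewrite QE_l
  | rewrite EQ | rewrite EQ_l ]).

Definition Xm := 2%:R *: P - 1%:M.
Definition Ym := 2%:R *: Q - 1%:M.
Definition Km := P *m Q - Q *m P.

Lemma G1 : Xm *m Ym *m Xm *m Ym - Ym *m Xm *m Ym *m Xm = (16%:R * a - 8%:R) *: Km.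
Proof.
rewrite /Xm /Ym /Km; norm.
apply/matrixP => i j; rewrite !mxE; ring.
Qed.

Lemma G2 : Xm *m Ym *m Xm *m Ym + Ym *m Xm *m Ym *m Xm =
  16%:R *: (Km *m Km) + 2%:R *: 1%:M.
Proof.
rewrite /Xm /Ym /Km; norm.
apply/matrixP => i j; rewrite !mxE; ring.
Qed.

Lemma G3 : Km *m Km *m Km = - (a * (1 - a)) *: Km.
Proof.
rewrite /Km; norm.
apply/matrixP => i j; rewrite !mxE; ring.
Qed.

End Alg.

Set Implicit Arguments.
Unset Strict Implicit.
Unset Printing Implicit Defensive.

Section CHelp.
Variable R : realType.

Lemma expi_sub (t : R) : expi t - (expi t)^* = 'i * (2 * sin t)%:C.
Proof. by rewrite /expi /=; apply/eqP; rewrite eq_complex /=; apply/andP; split; apply/eqP; ring. Qed.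

Lemma expi_add (t : R) : expi t + (expi t)^* = (2 * cos t)%:C.
Proof. by rewrite /expi /=; apply/eqP; rewrite eq_complex /=; apply/andP; split; apply/eqP; ring. Qed.

Lemma iC_cube (x : R) : ('i * x%:C) * ('i * x%:C) * ('i * x%:C) = 'i * (- x ^+ 3)%:C.
Proof. by apply/eqP; rewrite eq_complex /=; apply/andP; split; apply/eqP; ring. Qed.

Lemma iC_sq (x : R) : ('i * x%:C) * ('i * x%:C) = (- x ^+ 2)%:C.
Proof. by apply/eqP; rewrite eq_complex /=; apply/andP; split; apply/eqP; ring. Qed.

Lemma iC_inj (x y : R) : 'i * x%:C = 'i * y%:C -> x = y.
Proof. by move/eqP; rewrite eq_complex /= => /andP [_ /eqP]; lra. Qed.

Lemma C_mul (x y : R) : x%:C * y%:C = (x * y)%:C.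
Proof. by apply/eqP; rewrite eq_complex /=; apply/andP; split; apply/eqP; ring. Qed.

Lemma C_muli (x y : R) : x%:C * ('i * y%:C) = 'i * (x * y)%:C.
Proof. by apply/eqP; rewrite eq_complex /=; apply/andP; split; apply/eqP; ring. Qed.

End CHelp.

Set Implicit Arguments.
Unset Strict Implicit.
Unset Printing Implicit Defensive.

Lemma trig_key (R : realType) (t c0 : R) : - pi < t <= pi -> -1 < c0 < 1 ->
  (cos t = 1 \/ cos t = c0) -> t = acos c0 / sin (acos c0) * sin t.
Proof.
move=> /andP [ht1 ht2] /andP [hc1 hc2] hc.
have hc' : -1 <= c0 <= 1 by apply/andP; split; apply: ltW.
have hA : 0 < sin (acos c0).
  rewrite sin_acos // sqrtr_gt0; nra.
have hpi : 0 < pi :> R := pi_gt0 R.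
case: (lerP 0 t) => h0.
  have hK : acos (cos t) = t by rewrite cosK // in_itv /= h0 ht2.
  case: hc => hc.
    by move: hK; rewrite hc acos1 => <-; rewrite sin0 mulr0.
  have hs : sin t != 0 by rewrite -hK hc; exact: lt0r_neq0.
  by rewrite -hc hK divfK.
have hK : acos (cos (- t)) = - t.
  by rewrite cosK // in_itv /=; apply/andP; split; lra.
rewrite cosN in hK.
case: hc => hc.
  by move: hK; rewrite hc acos1 => /eqP; rewrite eq_sym oppr_eq0 => /eqP ->; rewrite sin0 mulr0.
have hs : sin (- t) != 0 by rewrite -hK hc; exact: lt0r_neq0.
have e : sin t = - sin (- t) by rewrite sinN opprK.
rewrite -hc hK e.
by rewrite mulrN divfK ?opprK.
Qed.

Set Implicit Arguments.
Unset Strict Implicit.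
Unset Printing Implicit Defensive.

Section Spec.
Variables (R : realType) (N : nat).
Local Notation C := (R[i]).

Lemma spectral (Wr Kr : 'M[R]_N) (g b : R) :
  g != 0 -> 0 < b -> b < 4%:R^-1 ->
  Wr - Wr^T = g *: Kr ->
  Wr + Wr^T = 16%:R *: (Kr *m Kr) + 2%:R *: 1%:M ->
  Kr *m Kr *m Kr = - b *: Kr ->
  forall H : 'M[C]_N, principal_hamiltonian (map_mx (fun x : R => x%:C) Wr) H ->
  exists nu : R, 'i *: H = map_mx (fun x : R => x%:C) (nu *: Kr).
Proof.
move=> hg hb0 hb1 h1 h2 h3 H [p [t [F [tinj [trng [Fnz [Fh [Fo [Fs [hW hH]]]]]]]]]].
pose cf (c : 'I_p -> C) := \sum_(r < p) c r *: F r.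
have cfF : forall c s, cf c *m F s = c s *: F s.
  move=> c s; rewrite /cf mulmx_suml (bigD1 s) //= -scalemxAl Fo eqxx big1 ?addr0 //.
  by move=> r hr; rewrite -scalemxAl Fo (negbTE hr) scaler0.
have cf_inj : forall c d, cf c = cf d -> forall s, c s = d s.
  move=> c d e s; have := cfF c s; rewrite e cfF => /eqP.
  rewrite -subr_eq0 -scalerBl scalemx_eq0 (negbTE (Fnz s)) orbF subr_eq0.
  by move/eqP.
have cfM : forall c d, cf c *m cf d = cf (fun r => c r * d r).
  move=> c d; rewrite [cf d]/cf mulmx_sumr; apply: eq_bigr => r _.
  by rewrite -scalemxAr cfF scalerA mulrC.
have cfD : forall c d, cf c + cf d = cf (fun r => c r + d r).
  by move=> c d; rewrite /cf -big_split; apply: eq_bigr => r _; rewrite scalerDl.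
have cfB : forall c d, cf c - cf d = cf (fun r => c r - d r).
  by move=> c d; rewrite /cf -sumrB; apply: eq_bigr => r _; rewrite scalerBl.
have cfZ : forall k c, k *: cf c = cf (fun r => k * c r).
  by move=> k c; rewrite /cf scaler_sumr; apply: eq_bigr => r _; rewrite scalerA.
have cf1 : 1%:M = cf (fun _ => 1).
  by rewrite /cf -Fs; apply: eq_bigr => r _; rewrite scale1r.
pose e r := expi (t r).
have mW : map_mx (fun x : R => x%:C) Wr = cf e by rewrite hW.
have mWt : map_mx (fun x : R => x%:C) Wr^T = cf (fun r => (e r)^*).
  apply/matrixP => i j; rewrite !mxE summxE.
  have := congr1 (fun M : 'M[C]_N => M j i) mW; rewrite mxE summxE => hji.
  rewrite -conjc_real hji rmorph_sum; apply: eq_bigr => r _.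
  by rewrite !mxE rmorphM /= Fh conjcK.
pose kap r := (g%:C)^-1 * (e r - (e r)^*).
have mK : map_mx (fun x : R => x%:C) Kr = cf kap.
  have -> : Kr = g^-1 *: (Wr - Wr^T) by rewrite h1 scalerA mulVf ?scale1r.
  rewrite map_mxZ map_mxB mW mWt cfB cfZ /= fmorphV.
  by [].
have ekap : forall r, kap r * kap r * kap r = (- b)%:C * kap r.
  have := congr1 (map_mx (fun x : R => x%:C)) h3.
  by rewrite !map_mxM map_mxZ mK !cfM cfZ => /cf_inj.
have ecos : forall r, e r + (e r)^* = (16%:R : R)%:C * (kap r * kap r) + (2%:R : R)%:C.
  have := congr1 (map_mx (fun x : R => x%:C)) h2.
  rewrite !map_mxD mW mWt cfD !map_mxZ map_mxM mK cfM map_mx1 cf1 !cfZ cfD.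
  by move/cf_inj => h r; rewrite h mulr1.
pose c0 := 1 - 8%:R * b.
exists (g / 2%:R * (acos c0 / sin (acos c0))).
rewrite hH map_mxZ mK cfZ scaler_sumr /cf; apply: eq_bigr => r _.
rewrite scalerA; congr (_ *: _).
have hkap : kap r = 'i * (2%:R * sin (t r) / g)%:C.
  by rewrite /kap /e expi_sub -fmorphV C_muli [g^-1 * _]mulrC.
move: (ekap r) (ecos r); rewrite hkap iC_cube C_muli /e expi_add iC_sq.
rewrite C_mul -rmorphD /= => /iC_inj hcub /complexI hcs.
rewrite C_muli; congr (_ * _%:C).
have hrng := trng r.
have hc0 : -1 < c0 < 1 by apply/andP; split; rewrite /c0; lra.
have hcase : cos (t r) = 1 \/ cos (t r) = c0.
  move: hcub hcs; set x := 2%:R * sin (t r) / g => hcub hcs.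
  have : x * (x ^+ 2 - b) == 0 by apply/eqP; rewrite mulrBr -exprS; lra.
  rewrite mulf_eq0 => /orP [/eqP hx | /eqP hx2].
    by left; move: hcs; rewrite hx expr0n /=; lra.
  by right; rewrite /c0; lra.
have ht := trig_key hrng hc0 hcase.
have hA : 0 < sin (acos c0).
  case/andP: hc0 => h1' h2'.
  rewrite sin_acos ?sqrtr_gt0; first nra.
  by apply/andP; split; apply: ltW.
rewrite {1}ht; field.
by rewrite hg lt0r_neq0.
Qed.

End Spec.

Set Implicit Arguments.
Unset Strict Implicit.
Unset Printing Implicit Defensive.

Lemma num1 (R : realType) (al m : R) : 3%:R <= m -> al * (m * m) = 1 -> 0 < al ->
  al * 9%:R <= 1.
Proof.
move=> hm3 hal hal0.
rewrite -hal; apply: ler_wpM2l; first exact: ltW.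
by nra.
Qed.

Lemma num2 (R : realType) (al : R) : 0 < al -> al * 9%:R <= 1 ->
  (16%:R * al - 8%:R != 0) /\ 0 < al * (1 - al) /\ al * (1 - al) < 4%:R^-1.
Proof.
move=> h0 h9; split; first by apply/eqP; lra.
split; first by apply: mulr_gt0 => //; lra.
have : al * (1 - al) <= al by rewrite ler_piMr //; lra.
lra.
Qed.

Lemma Xm_tr (R : fieldType) (N : nat) (A : 'M[R]_N) : A^T = A -> (Xm A)^T = Xm A.
Proof.
move=> h; have e : forall i j, A j i = A i j.
  by move=> i j; rewrite -[in RHS]h mxE.
by apply/matrixP => i j; rewrite /Xm !mxE e eq_sym.
Qed.

Section Final.
Variables (R : realType) (n : nat) (rho : {perm (arcK n)}).
Hypotheses (Hrot : rotation_system rho) (Hcirc : circular rho)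
  (Hsd : self_dual rho) (Hodd : odd n.-1).
Variable a0 : arcK n.
Local Notation AT := (arcK n * bool)%type.
Local Notation T := (Tf rho).

Let P := mxo (Pf R rho).
Let Q := mxo (Qf R (n := n)).
Let E := mxo (Ef R (n := n)).
Let al := alpha R n.

Let PP : P *m P = P.
Proof. by rewrite /P mxo_mul; apply: mxo_ext => x y; apply: (R1 R Hrot Hcirc Hsd a0). Qed.
Let QQ : Q *m Q = Q.
Proof. by rewrite /Q mxo_mul; apply: mxo_ext => x y; apply: (R2 R Hrot Hcirc Hsd a0). Qed.
Let EE : E *m E = E.
Proof. by rewrite /E mxo_mul; apply: mxo_ext => x y; apply: (R5E R Hrot Hcirc Hsd a0). Qed.
Let PE : P *m E = E.
Proof. by rewrite /P /E mxo_mul; apply: mxo_ext => x y; apply: (R5P R Hrot Hcirc Hsd a0). Qed.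
Let QE : Q *m E = E.
Proof. by rewrite /Q /E mxo_mul; apply: mxo_ext => x y; apply: (R5Q R Hrot Hcirc Hsd a0). Qed.
Let Ptr : P^T = P.
Proof. by rewrite /P mxo_tr; apply: mxo_ext => x y; rewrite Pf_sym. Qed.
Let Qtr : Q^T = Q.
Proof. by rewrite /Q mxo_tr; apply: mxo_ext => x y; rewrite Qf_sym. Qed.
Let Etr : E^T = E.
Proof. by rewrite /E mxo_tr. Qed.
Let EP : E *m P = E.
Proof. by apply: trmx_inj; rewrite trmx_mul Ptr Etr PE. Qed.
Let EQ : E *m Q = E.
Proof. by apply: trmx_inj; rewrite trmx_mul Qtr Etr QE. Qed.
Let PQ : P *m Q = mxo (PQf R rho).
Proof. by rewrite /P /Q mxo_mul; apply: mxo_ext => x y; apply: (R3 R Hrot Hcirc Hsd a0). Qed.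
Let QP : Q *m P = mxo (fun x y => PQf R rho y x).
Proof. by rewrite -Ptr -Qtr -trmx_mul PQ mxo_tr. Qed.
Let PQP : P *m Q *m P = al *: P + (1 - al) *: E.
Proof.
rewrite PQ /P mxo_mul /E mxo_lin; apply: mxo_ext => x y.
exact: (R4 R Hrot Hcirc Hsd a0).
Qed.

Let Xtr : (Xm P)^T = Xm P.
Proof. exact: Xm_tr Ptr. Qed.
Let Ytr : (Ym Q)^T = Ym Q.
Proof. exact: Xm_tr Qtr. Qed.

Let U := transition_mx R (@tailY n) (vfs rho).
Let UE : U = Xm P *m Ym Q.
Proof.
rewrite /U /transition_mx /=.
by rewrite (Mh_prod R Hrot Hcirc Hsd Hodd a0) (Nh_prod R Hrot Hcirc Hsd Hodd a0).
Qed.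

Definition Drel (x y : AT) : bool := (tailK y.1 \in T x.1) && (tailK x.1 \notin T y.1).

Let KE : Km P Q = (2 * mR R n * mR R n)^-1 *: skew_adj_mx R Drel.
Proof.
rewrite /Km PQ QP; apply/matrixP => i j; rewrite /mxo !mxE /PQf /Drel.
case: (tailK (enum_val j).1 \in T (enum_val i).1);
  case: (tailK (enum_val i).1 \in T (enum_val j).1) => /=;
  by rewrite ?subrr ?subr0 ?sub0r ?mulr1 ?mulrN1 ?mulr0.
Qed.

Ltac solve_rel := first [exact: PP | exact: QQ | exact: EE | exact: PE | exact: EP
  | exact: QE | exact: EQ | exact: PQP].

Lemma final_n (H : 'M[R[i]]_#|{: AT}|) :
  principal_hamiltonian
    (voltage_transition_mx R rho (@vol_nonid n) *m
     voltage_transition_mx R rho (@vol_nonid n)) H ->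
  is_oriented_graph_mx H.
Proof.
move=> hH.
have hm3 : 3%:R <= mR R n by rewrite /mR ler_nat; exact: (m_gt2 Hrot Hcirc Hsd a0).
have hal : al * (mR R n * mR R n) = 1 by rewrite /al /alpha mulVf // mulf_neq0 // (mR_neq0 R Hrot Hcirc Hsd a0).
have hal0 : 0 < al by rewrite /al /alpha invr_gt0 mulr_gt0 //; lra.
have hal9 := num1 hm3 hal hal0.
have [hg [hb0 hb1]] := num2 hal0 hal9.
have h1 : U *m U - (U *m U)^T = (16%:R * al - 8%:R) *: Km P Q.
  rewrite UE !trmx_mul Xtr Ytr !mulmxA.
  apply: (G1 (P := P) (Q := Q) (E := E) (a := al)); solve_rel.
have h2 : U *m U + (U *m U)^T = 16%:R *: (Km P Q *m Km P Q) + 2%:R *: 1%:M.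
  rewrite UE !trmx_mul Xtr Ytr !mulmxA.
  apply: (G2 (P := P) (Q := Q) (E := E) (a := al)); solve_rel.
have h3 : Km P Q *m Km P Q *m Km P Q = - (al * (1 - al)) *: Km P Q.
  apply: (G3 (P := P) (Q := Q) (E := E) (a := al)); solve_rel.
have hH' : principal_hamiltonian (map_mx (fun x : R => x%:C) (U *m U)) H.
  by rewrite map_mxM.
have [nu hnu] := spectral (g := 16%:R * al - 8%:R) (b := al * (1 - al))
   hg hb0 hb1 h1 h2 h3 hH'.
exists (nu * (2 * mR R n * mR R n)^-1), Drel; split.
  by move=> x y /andP [h1' h2']; rewrite /Drel negb_and h1' orbT.
by rewrite hnu KE scalerA.
Qed.

End Final.

Lemma odd_pow2m1 k : (0 < k)%N -> odd (2 ^ k).-1.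
Proof.
case: k => [//|k] _.
rewrite expnS.
have : (0 < 2 ^ k)%N by rewrite expn_gt0.
move: (2 ^ k)%N => x.
case: x => [//|y] _.
by rewrite mulnS addSn /= oddD oddM.
Qed.

Theorem corollary6p4 (R : realType) (k : nat) (rho : {perm (arcK (2 ^ k))}) :
  rotation_system rho -> circular rho -> self_dual rho ->
  forall H : 'M[R[i]]_#|{: (arcK (2 ^ k)) * bool}|,
    principal_hamiltonian
      (voltage_transition_mx R rho (@vol_nonid (2 ^ k)) *m
       voltage_transition_mx R rho (@vol_nonid (2 ^ k))) H ->
    is_oriented_graph_mx H.
Proof.
move=> Hrot Hcirc Hsd H hH.
case: (posnP k) => hk.
  exists 0, (fun _ _ => false); split => //.
  apply/matrixP => i j; exfalso.
  case: (enum_val i) => [[[u v] huv] g].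
  move: huv; have : (val u == val v).
    have e1 : (2 ^ k = 1)%N by rewrite hk.
    have hu : (val u < 1)%N := leq_trans (ltn_ord u) (eq_leq e1).
    have hv : (val v < 1)%N := leq_trans (ltn_ord v) (eq_leq e1).
    by apply/eqP; lia.
  by move=> /eqP /val_inj ->; rewrite eqxx.
have h2 : (1 < 2 ^ k)%N by rewrite -{1}(expn0 2) ltn_exp2l.
have h0 : (0 < 2 ^ k)%N by lia.
have h01 : (Ordinal h0, Ordinal h2).1 != (Ordinal h0, Ordinal h2).2 by [].
pose a0 := exist (fun p : 'I_(2 ^ k) * 'I_(2 ^ k) => p.1 != p.2) (Ordinal h0, Ordinal h2) h01.
have res := final_n Hrot Hcirc Hsd (@odd_pow2m1 k hk) a0 hH.
exact: res.
Qed.
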